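(* Let $\langle A,\to\rangle$ be a conditional algebra. There exists a dual lattice isomorphism between the lattice of congruences of $\langle A,\to\rangle$ and the lattice (ordered by inclusion) of $T_A$-closed subsets of the expanded Stone space $\langle\mathrm{Ul}(A),\tau_s,T_A\rangle$.
   Context: A conditional algebra is $\langle A,\to\rangle$ with $A$ a Boolean algebra and $\to$ binary with $a\to1=1$, $(a\to b)\wedge(a\to c)=a\to(b\wedge c)$, $(a\vee b)\to c\le(a\to c)\wedge(b\to c)$. $\mathrm{Ul}(A)$ is the Stone space of ultrafilters; closed sets are $\varphi(F)=\{u:F\subseteq u\}$ for filters $F$ (including $F=A$). $D^{\to}_u(F)=\{b:\exists a\in F,\ a\to b\in u\}$; $T_A(u,Z,v)$ iff there is a filter $F$ with $Z=\varphi(F)$ and $D^{\to}_u(F)\subseteq v$. For ultrafilters $x,y$, $\mathbf{C}(x,y)$ is the set of closed $Z$ with $T_A(x,Z,y)$. A closed set $Y$ is $T_A$-closed if for all $x,y$: if $x\in Y$ and $Z$ is a minimal element of $\mathbf{C}(x,y)$ under inclusion, then $Z\subseteq Y$ and $y\in Y$. *)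

(* Defs.v *)
(* a Boolean algebra is a complemented distributive lattice
   with top and bottom, i.e. MathComp's ctbDistrLatticeType. *)
From mathcomp Require Import all_boot all_order.
Set Implicit Arguments. Unset Strict Implicit. Unset Printing Implicit Defensive.
Import Order.Theory.
Local Open Scope order_scope.

Section Defs.
Context {disp : Order.disp_t} {A : ctbDistrLatticeType disp}.
Variable imp : A -> A -> A.

Definition psub {T : Type} (P Q : T -> Prop) : Prop := forall z, P z -> Q z.

Definition conditional_algebra : Prop :=
  (forall a : A, imp a \top = \top) /\
  (forall a b c : A, imp a b `&` imp a c = imp a (b `&` c)) /\
  (forall a b c : A, imp (a `|` b) c <= imp a c `&` imp b c).

Definition congruence (th : A -> A -> Prop) : Prop :=
  (forall a, th a a) /\ (forall a b, th a b -> th b a) /\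
  (forall a b c, th a b -> th b c -> th a c) /\
  (forall a b a' b', th a a' -> th b b' -> th (a `&` b) (a' `&` b')) /\
  (forall a b a' b', th a a' -> th b b' -> th (a `|` b) (a' `|` b')) /\
  (forall a a', th a a' -> th (~` a) (~` a')) /\
  (forall a b a' b', th a a' -> th b b' -> th (imp a b) (imp a' b')).

(* filters (the improper filter A included) *)
Definition bfilter (F : A -> Prop) : Prop :=
  F \top /\ (forall a b, F a -> a <= b -> F b) /\
  (forall a b, F a -> F b -> F (a `&` b)).

Definition ultrafilter (u : A -> Prop) : Prop :=
  bfilter u /\ ~ u \bot /\
  (forall G, bfilter G -> ~ G \bot -> psub u G -> psub G u).

Definition phi (F : A -> Prop) : (A -> Prop) -> Prop :=
  fun u => ultrafilter u /\ psub F u.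

Definition is_closed (Z : (A -> Prop) -> Prop) : Prop :=
  exists F, bfilter F /\ Z = phi F.

Definition Dimp (u F : A -> Prop) : A -> Prop :=
  fun b => exists a, F a /\ u (imp a b).

Definition TA (u : A -> Prop) (Z : (A -> Prop) -> Prop) (v : A -> Prop) : Prop :=
  exists F, bfilter F /\ Z = phi F /\ psub (Dimp u F) v.

Definition Cset (x y : A -> Prop) (Z : (A -> Prop) -> Prop) : Prop :=
  is_closed Z /\ TA x Z y.

Definition minimal_C (x y : A -> Prop) (Z : (A -> Prop) -> Prop) : Prop :=
  Cset x y Z /\ (forall Z', Cset x y Z' -> psub Z' Z -> psub Z Z').

Definition TA_closed (Y : (A -> Prop) -> Prop) : Prop :=
  is_closed Y /\
  (forall x y Z, ultrafilter x -> ultrafilter y -> Y x -> minimal_C x y Z ->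
     psub Z Y /\ Y y).

End Defs.

(* Main.v *)
Require Import Defs.
From mathcomp Require Import all_boot all_order.
From mathcomp Require boolp classical_sets.
From Stdlib Require Import Classical FunctionalExtensionality PropExtensionality.
Set Implicit Arguments. Unset Strict Implicit. Unset Printing Implicit Defensive.
Import Order.Theory.

Section Proofs.
Local Open Scope order_scope.
Context {disp : Order.disp_t} {A : ctbDistrLatticeType disp}.

Lemma L_split (x d : A) : x <= (x `&` d) `|` (x `&` ~` d).
Proof. by rewrite -meetUr joinxC meetx1. Qed.

Lemma L_B1 (m d : A) : m `&` d <= \bot -> m <= ~` d.
Proof.
move=> H; apply: le_trans (L_split m d) _; rewrite leUx; apply/andP; split.
  exact: le_trans H (le0x _).
exact: leIr.
Qed.

Lemma L_B2 (m1 m2 d e : A) : m1 `&` d <= e -> m2 `&` ~` d <= e -> m1 `&` m2 <= e.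
Proof.
move=> H1 H2; apply: le_trans (L_split _ d) _; rewrite leUx; apply/andP; split.
  by apply: le_trans _ H1; apply: leI2 (leIl _ _) (lexx _).
by apply: le_trans _ H2; apply: leI2 (leIr _ _) (lexx _).
Qed.

Lemma L_B3 (p q : A) : p `&` (~` p `|` q) = p `&` q.
Proof. by rewrite meetUr meetxC join0x. Qed.

Lemma filter_top (F : A -> Prop) : bfilter F -> F \top.
Proof. by case. Qed.
Lemma filter_up (F : A -> Prop) a b : bfilter F -> F a -> a <= b -> F b.
Proof. by case=> _ [H _]; apply: H. Qed.
Lemma filter_meet (F : A -> Prop) a b : bfilter F -> F a -> F b -> F (a `&` b).
Proof. by case=> _ [_ H]; apply: H. Qed.

Lemma uf_filter (u : A -> Prop) : ultrafilter u -> bfilter u.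
Proof. by case. Qed.

Lemma uf_not_both (u : A -> Prop) d : ultrafilter u -> u d -> u (~` d) -> False.
Proof.
move=> [Hf [Hb _]] H1 H2; apply: Hb.
by have := filter_meet Hf H1 H2; rewrite meetxC.
Qed.

Lemma uf_compl (u : A -> Prop) d : ultrafilter u -> ~ u d -> u (~` d).
Proof.
move=> [Hf [Hb Hmax]] Hd.
pose G := fun e => exists m, u m /\ m `&` d <= e.
have GF : bfilter G.
  split; first by exists \top; split; [exact: filter_top|exact: lex1].
  split.
    by move=> a b [m [um Hm]] ab; exists m; split=> //; apply: le_trans Hm ab.
  move=> a b [m1 [u1 H1]] [m2 [u2 H2]]; exists (m1 `&` m2); split.
    exact: filter_meet.
  rewrite lexI; apply/andP; split.
    by apply: le_trans H1; apply: leI2 (leIl _ _) (lexx _).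
  by apply: le_trans H2; apply: leI2 (leIr _ _) (lexx _).
case: (classic (G \bot)) => [[m [um Hm]]|nG].
  by apply: filter_up Hf um _; apply: L_B1.
exfalso; apply: Hd; apply: (Hmax G GF nG).
  by move=> z uz; exists z; split=> //; exact: leIl.
by exists \top; split; [exact: filter_top|rewrite meet1x].
Qed.

Lemma uf_join (u : A -> Prop) a b : ultrafilter u -> u (a `|` b) -> u a \/ u b.
Proof.
move=> Hu Hab; case: (classic (u a)) => [|na]; first by left.
case: (classic (u b)) => [|nb]; first by right.
exfalso; apply: (uf_not_both Hu Hab).
rewrite complU; exact: filter_meet (uf_filter Hu) (uf_compl Hu na) (uf_compl Hu nb).
Qed.

Lemma maxfilter (F0 : A -> Prop) (Q : (A -> Prop) -> Prop) :
  bfilter F0 -> Q F0 ->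
  (forall C : (A -> Prop) -> Prop, (forall G, C G -> bfilter G /\ psub F0 G /\ Q G) ->
    (forall G H, C G -> C H -> psub G H \/ psub H G) -> (exists G, C G) ->
    Q (fun a => exists G, C G /\ G a)) ->
  exists M, bfilter M /\ psub F0 M /\ Q M /\
    (forall G, bfilter G -> Q G -> psub M G -> psub G M).
Proof.
move=> hF0 hQ hC.
pose P := fun G => bfilter G /\ psub F0 G /\ Q G.
pose T := {G : A -> Prop | P G}.
have p0 : P F0 by split=> //; split=> //; move=> z.
pose t0 : T := exist _ F0 p0.
pose R := fun s t : T => boolp.asbool (psub (proj1_sig s) (proj1_sig t)).
have Rr : forall t, R t t by move=> t; apply/boolp.asboolP => z.
have Rt : forall r s t, R r s -> R s t -> R r t.
  move=> r s t /boolp.asboolP H1 /boolp.asboolP H2; apply/boolp.asboolP.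
  by move=> z /H1 /H2.
have Rc : forall A' : classical_sets.set T, classical_sets.total_on A' (fun x y => R x y) ->
   exists t, forall s, A' s -> R s t.
  move=> A' Atot.
  case: (classic (exists s, A' s)) => [[s0 As0]|nA]; last first.
    by exists t0 => s As; exfalso; apply: nA; exists s.
  pose C := fun G => exists s, A' s /\ proj1_sig s = G.
  have CP : forall G, C G -> P G by move=> G [s [_ <-]]; exact: proj2_sig.
  have Ctot : forall G H, C G -> C H -> psub G H \/ psub H G.
    move=> G H [s [As <-]] [t [At <-]].
    by case: (Atot s t As At) => /boolp.asboolP; [left|right].
  pose U := fun a => exists G, C G /\ G a.
  have PU : P U.
    split; last split.
    + split.
        have Cs0 : C (proj1_sig s0) by exists s0.
        by exists (proj1_sig s0); split=> //; exact: filter_top (proj1 (CP _ Cs0)).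
      split.
        move=> a b [G [CG Ga]] ab; exists G; split=> //.
        exact: filter_up (proj1 (CP _ CG)) Ga ab.
      move=> a b [G [CG Ga]] [H [CH Hb]].
      case: (Ctot G H CG CH) => [GH|HG].
        by exists H; split=> //; apply: filter_meet (proj1 (CP _ CH)) (GH _ Ga) Hb.
      by exists G; split=> //; apply: filter_meet (proj1 (CP _ CG)) Ga (HG _ Hb).
    + move=> z Fz; exists (proj1_sig s0); split; first by exists s0.
      exact: (proj1 (proj2 (proj2_sig s0))).
    + apply: hC => //; last by exists (proj1_sig s0); exists s0.
  exists (exist _ U PU) => s As; apply/boolp.asboolP => z sz /=.
  by exists (proj1_sig s); split=> //; exists s.
have [t tmax] := @classical_sets.ZL_preorder T t0 R Rr Rt Rc.
case: t tmax => M [Mf [FM QM]] tmax.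
exists M; split=> //; split=> //; split=> //.
move=> G Gf QG MG.
have PG : P G by split=> //; split=> // z /FM /MG.
have := tmax (exist _ G PG); rewrite /R /=.
by move=> H; apply/boolp.asboolP; apply: H; apply/boolp.asboolP.
Qed.


Lemma uf_ext (P : A -> Prop) e : bfilter P -> ~ P e ->
  exists u, ultrafilter u /\ psub P u /\ ~ u e.
Proof.
move=> hP nPe.
have hC : forall C : (A -> Prop) -> Prop,
    (forall G, C G -> bfilter G /\ psub P G /\ ~ G e) ->
    (forall G H, C G -> C H -> psub G H \/ psub H G) -> (exists G, C G) ->
    ~ (fun a => exists G, C G /\ G a) e.
  by move=> C HC _ _ [G [CG Ge]]; case: (HC G CG) => _ [_]; apply.
have [M [Mf [PM [nMe Mmax]]]] := @maxfilter P (fun G => ~ G e) hP nPe hC.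
have ext : forall d, M d \/ exists m, M m /\ m `&` d <= e.
  move=> d.
  pose Md := fun z => exists m, M m /\ m `&` d <= z.
  have Mdf : bfilter Md.
    split; first by exists \top; split; [exact: filter_top|exact: lex1].
    split.
      by move=> a b [m [um Hm]] ab; exists m; split=> //; apply: le_trans Hm ab.
    move=> a b [m1 [u1 H1]] [m2 [u2 H2]]; exists (m1 `&` m2); split.
      exact: filter_meet.
    rewrite lexI; apply/andP; split.
      by apply: le_trans H1; apply: leI2 (leIl _ _) (lexx _).
    by apply: le_trans H2; apply: leI2 (leIr _ _) (lexx _).
  case: (classic (Md e)) => [H|H]; first by right.
  left; apply: (Mmax Md Mdf H).
    by move=> z Mz; exists z; split=> //; exact: leIl.
  by exists \top; split; [exact: filter_top|rewrite meet1x].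
have prime : forall d, M d \/ M (~` d).
  move=> d; case: (ext d) => [|[m1 [M1 H1]]]; first by left.
  case: (ext (~` d)) => [|[m2 [M2 H2]]]; first by right.
  exfalso; apply: nMe; apply: filter_up Mf (filter_meet Mf M1 M2) _.
  exact: L_B2 H1 H2.
exists M; split; last by split.
split=> //; split.
  by move=> Mb; apply: nMe; apply: filter_up Mf Mb (le0x _).
move=> G Gf nGb MG g Gg.
case: (prime g) => // Mng; exfalso; apply: nGb.
by have := filter_meet Gf Gg (MG _ Mng); rewrite meetxC.
Qed.

Lemma filter_inter (G : A -> Prop) d : bfilter G ->
  (forall u, ultrafilter u -> psub G u -> u d) -> G d.
Proof.
move=> Gf H; apply: NNPP => nGd.
have [u [uu [Gu nud]]] := uf_ext Gf nGd.
exact: nud (H u uu Gu).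
Qed.

Lemma phi_sub (F G : A -> Prop) : bfilter G -> psub (phi G) (phi F) -> psub F G.
Proof.
move=> Gf H f Ff; apply: filter_inter => // u uu Gu.
by have [_ ] := H u (conj uu Gu); apply.
Qed.

End Proofs.

Section Imp.
Local Open Scope order_scope.
Context {disp : Order.disp_t} {A : ctbDistrLatticeType disp}.
Context (imp : A -> A -> A) (hA : conditional_algebra imp).

Lemma imp_top a : imp a \top = \top.
Proof. by case: hA. Qed.

Lemma imp_anti a a' c : a <= a' -> imp a' c <= imp a c.
Proof.
move=> aa'; case: hA => _ [_ H3].
have := H3 a a' c; rewrite (join_idPr aa') => H.
exact: le_trans H (leIl _ _).
Qed.

Lemma imp_mono c b b' : b <= b' -> imp c b <= imp c b'.
Proof.
move=> bb'; case: hA => _ [H2 _].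
by rewrite -(meet_idPl bb') -H2; exact: leIr.
Qed.

Lemma R_filter (x : A -> Prop) a : ultrafilter x -> bfilter (fun d => x (imp a d)).
Proof.
move=> [xf _]; split; first by rewrite imp_top; exact: filter_top.
split.
  by move=> b c xb bc; apply: filter_up xf xb (imp_mono _ bc).
move=> b c xb xc; case: hA => _ [H2 _]; rewrite -H2; exact: filter_meet.
Qed.

Definition upset (a : A) := fun z => a <= z.

Lemma upset_filter a : bfilter (upset a).
Proof.
split; first exact: lex1.
split; first by move=> b c ab bc; exact: le_trans ab bc.
by move=> b c ab ac; rewrite /upset lexI; apply/andP.
Qed.

Lemma min_exists (x y : A -> Prop) a : ultrafilter x ->
  psub (fun d => x (imp a d)) y ->
  exists G, bfilter G /\ G a /\ psub (Dimp imp x G) y /\ minimal_C imp x y (phi G).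
Proof.
move=> ux Ry.
have Q0 : psub (Dimp imp x (upset a)) y.
  move=> b [z [az xz]]; apply: Ry.
  exact: filter_up (uf_filter ux) xz (imp_anti _ az).
have hC : forall C : (A -> Prop) -> Prop,
    (forall G, C G -> bfilter G /\ psub (upset a) G /\ psub (Dimp imp x G) y) ->
    (forall G H, C G -> C H -> psub G H \/ psub H G) -> (exists G, C G) ->
    psub (Dimp imp x (fun a => exists G, C G /\ G a)) y.
  move=> C HC _ _ b [z [[G [CG Gz]] xz]].
  by case: (HC G CG) => _ [_]; apply; exists z.
have [M [Mf [aM [QM Mmax]]]] := maxfilter (upset_filter a) Q0 hC.
exists M; split=> //; split; first exact: aM (lexx a).
split=> //; split.
  by split; [exists M|exists M].
move=> Z' [_ [G' [G'f [-> QG']]]] sub.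
have MG' := phi_sub G'f sub.
have G'M := Mmax G' G'f QG' MG'.
by move=> u [uu Mu]; split=> // z /G'M /Mu.
Qed.

End Imp.

Section Main.
Local Open Scope order_scope.
Context {disp : Order.disp_t} {A : ctbDistrLatticeType disp}.
Context (imp : A -> A -> A) (hA : conditional_algebra imp).

Definition Fth (th : A -> A -> Prop) := fun a => th a \top.

Lemma uf_meet_iff (u : A -> Prop) a b : ultrafilter u -> (u (a `&` b) <-> u a /\ u b).
Proof.
move=> uu; have uf := uf_filter uu; split.
  by move=> h; split; apply: filter_up uf h _; [exact: leIl|exact: leIr].
by case=> h1 h2; exact: filter_meet.
Qed.

Lemma uf_join_iff (u : A -> Prop) a b : ultrafilter u -> (u (a `|` b) <-> u a \/ u b).
Proof.
move=> uu; have uf := uf_filter uu; split; first exact: uf_join.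
by case=> h; apply: filter_up uf h _; [exact: leUl|exact: leUr].
Qed.

Lemma uf_compl_iff (u : A -> Prop) a : ultrafilter u -> (u (~` a) <-> ~ u a).
Proof.
move=> uu; split; last exact: uf_compl.
by move=> h1 h2; exact: uf_not_both uu h2 h1.
Qed.

Lemma cong_filter th : congruence imp th -> bfilter (Fth th).
Proof.
case=> Hr [Hs [Ht [Hm [Hj [Hc Hi]]]]].
split; first exact: Hr.
split.
  move=> a b Fa ab; have := Hj a b \top b Fa (Hr b).
  by rewrite (join_idPr ab) join1x.
by move=> a b Fa Fb; have := Hm _ _ _ _ Fa Fb; rewrite meetx1.
Qed.

Lemma cong_transfer th (x : A -> Prop) p q : congruence imp th -> bfilter x ->
  psub (Fth th) x -> th p q -> x p -> x q.
Proof.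
case=> Hr [Hs [Ht [Hm [Hj [Hc Hi]]]]] xf xF tpq xp.
have H : th (~` p `|` q) \top.
  by have := Hj _ _ _ _ (Hc _ _ tpq) (Hr q); rewrite joinCx.
have := filter_meet xf xp (xF _ H); rewrite L_B3 => h.
exact: filter_up xf h (leIr _ _).
Qed.

Lemma cong_closed th : congruence imp th -> TA_closed imp (phi (Fth th)).
Proof.
move=> hc; have Ff := cong_filter hc.
case: (hc) => Hr [Hs [Ht [Hm [Hj [Hc Hi]]]]].
split; first by exists (Fth th).
move=> x y Z ux uy [_ Fx] [[_ [G [Gf [ZG DG]]]] Zmin].
pose G' := fun d => exists g f, G g /\ Fth th f /\ g `&` f <= d.
have G'f : bfilter G'.
  split.
    exists \top, \top; split; first exact: filter_top.
    by split; [exact: Hr|exact: lex1].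
  split.
    move=> a b [g [f [Gg [Ff' H]]]] ab; exists g, f; split=> //; split=> //.
    exact: le_trans H ab.
  move=> a b [g1 [f1 [G1 [F1 H1]]]] [g2 [f2 [G2 [F2 H2]]]].
  exists (g1 `&` g2), (f1 `&` f2); split; first exact: filter_meet.
  split; first exact: filter_meet.
  rewrite lexI; apply/andP; split.
    by apply: le_trans H1; apply: leI2 (leIl _ _) (leIl _ _).
  by apply: le_trans H2; apply: leI2 (leIr _ _) (leIr _ _).
have DG' : psub (Dimp imp x G') y.
  move=> b [a [[g [f [Gg [Fg H]]]] xab]].
  have x1 : x (imp (g `&` f) b) := filter_up (uf_filter ux) xab (imp_anti hA _ H).
  have t1 : th (g `&` f) g by have := Hm _ _ _ _ (Hr g) Fg; rewrite meetx1.
  have x2 := cong_transfer hc (uf_filter ux) Fx (Hi _ _ _ _ t1 (Hr b)) x1.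
  by apply: DG; exists g.
have GG' : psub G G'.
  by move=> g Gg; exists g, \top; split=> //; split; [exact: Hr|exact: leIl].
have sub : psub (phi G') Z by rewrite ZG => u [uu G'u]; split=> // z /GG' /G'u.
have := Zmin (phi G') (conj (ex_intro _ G' (conj G'f erefl))
   (ex_intro _ G' (conj G'f (conj erefl DG')))) sub.
rewrite ZG => /(phi_sub Gf) G'G.
have FG : psub (Fth th) G.
  move=> f Ff'; apply: G'G; exists \top, f; split; first exact: filter_top.
  by split=> //; rewrite meet1x.
split; first by move=> u [uu Gu]; split=> // z /FG /Gu.
split=> // f Ff'.
have : Fth th (imp \top f) by have := Hi _ _ _ _ (Hr \top) Ff'; rewrite imp_top.
move=> /Fx xf; apply: DG; exists \top; split=> //; exact: filter_top.
Qed.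

Lemma cong_char th a b : congruence imp th ->
  (th a b <-> forall u, ultrafilter u -> psub (Fth th) u -> (u a <-> u b)).
Proof.
move=> hc; have Ff := cong_filter hc.
case: (hc) => Hr [Hs [Ht [Hm [Hj [Hc Hi]]]]].
split.
  move=> tab u uu Fu; split.
    exact: cong_transfer hc (uf_filter uu) Fu tab.
  exact: cong_transfer hc (uf_filter uu) Fu (Hs _ _ tab).
move=> H.
have K : forall a' b', (forall u, ultrafilter u -> psub (Fth th) u -> u a' -> u b') ->
    th a' (a' `&` b').
  move=> a' b' H'.
  have F1 : Fth th (~` a' `|` b').
    apply: filter_inter Ff _ => u uu Fu; case: (classic (u a')) => ua.
      exact: filter_up (uf_filter uu) (H' u uu Fu ua) (leUr _ _).
    exact: filter_up (uf_filter uu) (uf_compl uu ua) (leUl _ _).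
  by have := Hm _ _ _ _ (Hr a') (Hs _ _ F1); rewrite meetx1 L_B3.
have h1 := K a b (fun u uu Fu => proj1 (H u uu Fu)).
have h2 := K b a (fun u uu Fu => proj2 (H u uu Fu)).
rewrite meetC in h2; exact: Ht _ _ _ h1 (Hs _ _ h2).
Qed.

Lemma closed_cong Y : TA_closed imp Y ->
  exists th, congruence imp th /\ phi (Fth th) = Y.
Proof.
move=> [[F [Ff ->]] HY].
pose th := fun a b => forall u, phi F u -> (u a <-> u b).
have step2 : forall x a b b', phi F x -> x (imp a b) -> th b b' -> x (imp a b').
  move=> x a b b' Yx xab tb; apply: NNPP => nx.
  have [y [uy [Ry nyb']]] := uf_ext (R_filter hA a (proj1 Yx)) nx.
  have [G [_ [_ [_ Gmin]]]] := min_exists hA (proj1 Yx) Ry.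
  have [_ Yy] := HY x y _ (proj1 Yx) uy Yx Gmin.
  by apply: nyb'; apply/(tb y Yy); apply: Ry.
have step1 : forall x a a' b, phi F x -> x (imp a b) -> th a a' -> x (imp a' b).
  move=> x a a' b Yx xab ta; apply: NNPP => nx.
  have [y [uy [Ry nyb]]] := uf_ext (R_filter hA a' (proj1 Yx)) nx.
  have [G [Gf [Ga' [DG Gmin]]]] := min_exists hA (proj1 Yx) Ry.
  have [sub _] := HY x y _ (proj1 Yx) uy Yx Gmin.
  have Ga : G a.
    apply: filter_inter Gf _ => u uu Gu.
    have Yu := sub u (conj uu Gu).
    by apply/(ta u Yu); apply: Gu.
  by apply: nyb; apply: DG; exists a.
exists th; split.
  split; first by move=> a u _.
  split; first by move=> a b H u Yu; have := H u Yu; tauto.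
  split; first by move=> a b c H1 H2 u Yu; have := H1 u Yu; have := H2 u Yu; tauto.
  split.
    move=> a b a' b' H1 H2 u Yu; have := H1 u Yu; have := H2 u Yu.
    have := uf_meet_iff a b (proj1 Yu); have := uf_meet_iff a' b' (proj1 Yu); tauto.
  split.
    move=> a b a' b' H1 H2 u Yu; have := H1 u Yu; have := H2 u Yu.
    have := uf_join_iff a b (proj1 Yu); have := uf_join_iff a' b' (proj1 Yu); tauto.
  split.
    move=> a a' H1 u Yu; have := H1 u Yu.
    have := uf_compl_iff a (proj1 Yu); have := uf_compl_iff a' (proj1 Yu); tauto.
  move=> a b a' b' H1 H2 u Yu; split=> h.
    exact: step2 Yu (step1 _ _ _ _ Yu h H1) H2.
  have H1' : th a' a by move=> v Yv; have := H1 v Yv; tauto.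
  have H2' : th b' b by move=> v Yv; have := H2 v Yv; tauto.
  exact: step2 Yu (step1 _ _ _ _ Yu h H1') H2'.
congr phi; apply: functional_extensionality => a.
apply: propositional_extensionality; split.
  move=> H; apply: filter_inter Ff _ => u uu Fu.
  by apply/(H u (conj uu Fu)); exact: filter_top (uf_filter uu).
move=> Fa u [uu Fu]; split=> _; first exact: filter_top (uf_filter uu).
exact: Fu.
Qed.

Lemma cong_order th1 th2 : congruence imp th1 -> congruence imp th2 ->
  ((forall a b, th1 a b -> th2 a b) <-> psub (phi (Fth th2)) (phi (Fth th1))).
Proof.
move=> h1 h2; split.
  by move=> H u [uu F2u]; split=> // z Fz; apply: F2u; exact: H _ _ Fz.
move=> H a b t1.
have F12 := phi_sub (cong_filter h2) H.
apply/(cong_char _ _ h2) => u uu Fu.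
exact: (proj1 (cong_char a b h1) t1) u uu (fun z Fz => Fu z (F12 z Fz)).
Qed.

End Main.

Theorem theorem8p4 (disp : Order.disp_t) (A : ctbDistrLatticeType disp)
  (imp : A -> A -> A) :
  conditional_algebra imp ->
  exists f : (A -> A -> Prop) -> ((A -> Prop) -> Prop),
    (forall th, congruence imp th -> TA_closed imp (f th)) /\
    (forall Y, TA_closed imp Y -> exists th, congruence imp th /\ f th = Y) /\
    (forall th1 th2, congruence imp th1 -> congruence imp th2 ->
       ((forall a b, th1 a b -> th2 a b) <-> psub (f th2) (f th1))) /\
    (forall th1 th2, congruence imp th1 -> congruence imp th2 ->
       f th1 = f th2 -> th1 = th2).
Proof.
move=> hA.
exists (fun th => phi (Fth th)).
split; first by move=> th; exact: (cong_closed hA).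
split; first by move=> Y; exact: (closed_cong hA).
split; first by move=> th1 th2 h1 h2 /=; exact: (cong_order h1 h2).
move=> th1 th2 h1 h2 E.
apply: functional_extensionality => a; apply: functional_extensionality => b.
apply: propositional_extensionality; split.
  by apply: (proj2 (cong_order h1 h2)); rewrite E.
by apply: (proj2 (cong_order h2 h1)); rewrite E.
Qed.
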